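(* Let $\mu$ be a positive Borel measure on $\mathbb{R}$ with infinitely many points in its support and all moments finite, let $(\hat p_n)_{n\ge0}$ be its monic orthogonal polynomials, and let $(\rho_n)_{n\ge0}$ be nonzero real numbers with $\rho_0=1$, $p_n=\rho_n\hat p_n$. Then $(p_n)_n$ satisfies the three term recurrence $$xp_n(x)=a_{n+1}p_{n+1}(x)+b_np_n(x)+c_np_{n-1}(x),\quad n\ge1,$$ with $a_n=\rho_{n-1}/\rho_n$, $c_n=\rho_n\hat c_n/\rho_{n-1}$ (where $x\hat p_n=\hat p_{n+1}+b_n\hat p_n+\hat c_n\hat p_{n-1}$, $\hat c_n>0$). Let $K\ge2$ be an integer and $\gamma_0,\dots,\gamma_K$ real numbers with $\gamma_0\neq0$, $\gamma_K\neq0$, and set $$q_n(x)=\sum_{j=0}^K\gamma_jp_{n-j}(x),\quad n\ge K.$$ Then there exist polynomials $A$, of degree $K-2$, and $B$, of degree $K-1$ (depending on $n$), such that $$q_n(x)=A(x)p_n(x)+B(x)p_{n-1}(x).$$ Moreover, assume that $(\tau_n)_n$ is a decreasing sequence of positive numbers such that for a certain positive integer $n_1$ $$\max\left\{\left|\frac{a_n}{c_{n-1}}\right|,\left|\frac{b_{n-1}}{c_{n-1}}\right|,\left|\frac{1}{c_{n-1}}\right|\right\}\le\tau_n\le\frac12,\quad n\ge n_1.$$ Then for $n\ge n_1$ and all real $x$, $$|A(x)|\le2^K\Gamma_0\Big(1+\sum_{j=1}^{K-2}\tau_{n-K+1}^{j+1}|x|^j\Big),\qquad |B(x)|\le2^K\Gamma_1\sum_{j=0}^{K-1}\tau_{n-K+1}^{j}|x|^j,$$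 where $\Gamma_i=\max\{|\gamma_j|:i\le j\le K\}$.
   Context: The sequence $(b_n)_n$ is the sequence of coefficients in the recurrence of the monic orthogonal polynomials $x\hat p_n(x)=\hat p_{n+1}(x)+b_n\hat p_n(x)+\hat c_n\hat p_{n-1}(x)$, $n\ge1$. *)

(* Defs.v *)
From HB Require Import structures.
From mathcomp Require Import all_boot all_order all_algebra.
From mathcomp Require Import all_classical all_reals all_analysis.
Set Implicit Arguments. Unset Strict Implicit. Unset Printing Implicit Defensive.
Import Order.TTheory GRing.Theory Num.Theory.
Local Open Scope classical_set_scope.
Local Open Scope ring_scope.

Definition msupport (R : realType) (mu : {measure set R -> \bar R}) : set R :=
  [set x | forall e : R, 0 < e -> (0 < mu `](x - e)%R, (x + e)%R[%classic)%E].

Definition finite_moments (R : realType) (mu : {measure set R -> \bar R}) :=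
  forall k : nat, mu.-integrable setT (fun x : R => (x ^+ k)%:E).

Definition monic_OPS (R : realType) (mu : {measure set R -> \bar R})
    (ph : nat -> {poly R}) :=
  (forall n, ph n \is monic) /\ (forall n, size (ph n) = n.+1) /\
  (forall n m, n != m ->
     (\int[mu]_x ((ph n).[x] * (ph m).[x])%:E = 0)%E).

Definition rec_a (R : realType) (rho : nat -> R) (n : nat) : R :=
  rho n.-1 / rho n.
Definition rec_c (R : realType) (rho chat : nat -> R) (n : nat) : R :=
  rho n * chat n / rho n.-1.

Definition qcomb (R : realType) (gamma : nat -> R) (p : nat -> {poly R})
    (K n : nat) : {poly R} :=
  \sum_(j < K.+1) gamma j *: p (n - j)%N.

Definition GammaMax (R : realType) (gamma : nat -> R) (K i : nat) : R :=
  \big[Num.max/0]_(i <= j < K.+1) `|gamma j|.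

(* Main.v *)
Require Import Defs.
From HB Require Import structures.
From mathcomp Require Import all_boot all_order all_algebra.
From mathcomp Require Import all_classical all_reals all_analysis.
From mathcomp Require Import ring lra zify.
Set Implicit Arguments. Unset Strict Implicit. Unset Printing Implicit Defensive.
Import Order.TTheory GRing.Theory Num.Theory.
Local Open Scope classical_set_scope.
Local Open Scope ring_scope.


Definition stepP (R : fieldType) (al be ce : nat -> R) (j : nat) (y x : {poly R}) : {poly R} :=
  (ce j)^-1%:P * (('X - (be j)%:P) * y - (al j)%:P * x).

Fixpoint bwp (R : fieldType) (al be ce : nat -> R) (u0 u1 : {poly R}) (j : nat)
  : {poly R} * {poly R} :=
  if j is j'.+1 then let xy := bwp al be ce u0 u1 j' in
     (xy.2, stepP al be ce j' xy.2 xy.1) else (u0, u1).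

Lemma bwp_rec (R : fieldType) (al be ce : nat -> R) u0 u1 j :
  (bwp al be ce u0 u1 j.+2).1 =
  stepP al be ce j (bwp al be ce u0 u1 j.+1).1 (bwp al be ce u0 u1 j).1.
Proof. by []. Qed.

Lemma bwp_repr (R : fieldType) (al be ce : nat -> R) (P : nat -> {poly R}) (N : nat) :
  (forall j, (j.+2 <= N)%N -> P j.+2 = stepP al be ce j (P j.+1) (P j)) ->
  forall j, (j <= N)%N ->
  P j = (bwp al be ce 1 0 j).1 * P 0%N + (bwp al be ce 0 1 j).1 * P 1%N.
Proof.
move=> hP.
have H : forall j, (j.+1 <= N)%N ->
  P j = (bwp al be ce 1 0 j).1 * P 0%N + (bwp al be ce 0 1 j).1 * P 1%N /\
  P j.+1 = (bwp al be ce 1 0 j.+1).1 * P 0%N + (bwp al be ce 0 1 j.+1).1 * P 1%N.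
  elim=> [|j IH] hj.
    by rewrite /= mul1r mul0r addr0 mul0r add0r mul1r.
  have [h1 h2] := IH (ltnW hj).
  split=> //.
  rewrite hP // !bwp_rec h2 h1 /stepP; ring.
case=> [|j] hj; first by rewrite /= mul1r mul0r addr0.
by have [_ ->] := H j hj.
Qed.

Lemma size_stepP (R : fieldType) (al be ce : nat -> R) j (y x : {poly R}) k :
  ce j != 0 -> size y = k.+1 -> (size x <= k)%N ->
  size (stepP al be ce j y x) = k.+2.
Proof.
move=> hc hy hx; rewrite /stepP size_Cmul ?invr_eq0 //.
have hy0 : y != 0 by rewrite -size_poly_eq0 hy.
have hXy : size (('X - (be j)%:P) * y) = k.+2.
  by rewrite size_mul ?polyXsubC_eq0 // size_XsubC hy.
rewrite size_polyDl hXy // size_polyN.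
rewrite mul_polyC; apply: (leq_ltn_trans (size_scale_leq _ _)).
by apply: (leq_ltn_trans hx); rewrite ltnS leqnSn.
Qed.

Lemma horner_stepP (R : fieldType) (al be ce : nat -> R) j y x z :
  (stepP al be ce j y x).[z] = (ce j)^-1 * ((z - be j) * y.[z] - al j * x.[z]).
Proof. by rewrite /stepP !hornerE. Qed.

Lemma sizeV (R : fieldType) (al be ce : nat -> R) N :
  (forall j, (j.+2 <= N)%N -> ce j != 0) ->
  forall j, (j.+1 <= N)%N -> size (bwp al be ce 0 1 j.+1).1 = j.+1 /\
                             (size (bwp al be ce 0 1 j).1 <= j)%N.
Proof.
move=> hc; elim=> [|j IH] hj; first by rewrite /= size_poly0 size_poly1.
have [h1 h2] := IH (ltnW hj); split; last by rewrite h1.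
by rewrite bwp_rec (size_stepP al be (hc _ hj) h1 h2).
Qed.

Lemma sizeU (R : fieldType) (al be ce : nat -> R) N :
  (forall j, (j.+2 <= N)%N -> ce j != 0 /\ al j != 0) ->
  forall j, (j.+2 <= N)%N -> size (bwp al be ce 1 0 j.+2).1 = j.+1 /\
                             (size (bwp al be ce 1 0 j.+1).1 <= j)%N.
Proof.
move=> hc; elim=> [|j IH] hj.
  have [c0 a0] := hc 0%N hj.
  rewrite bwp_rec /= size_poly0; split=> //.
  rewrite /stepP mulr0 mulr1 sub0r -polyCN -polyCM size_polyC.
  by rewrite mulf_neq0 ?invr_eq0 ?oppr_eq0.
have [h1 h2] := IH (ltnW hj); split; last by rewrite h1.
by rewrite bwp_rec (size_stepP al be (proj1 (hc _ hj)) h1 h2).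
Qed.

Lemma step_bound (R : realFieldType) (al be ce : nat -> R) j y x z t :
  `|1 / ce j| <= t -> `|be j / ce j| <= t -> `|al j / ce j| <= t ->
  `|(stepP al be ce j y x).[z]| <= (t * `|z| + t) * `|y.[z]| + t * `|x.[z]|.
Proof.
move=> h1 h2 h3; rewrite horner_stepP.
have -> : (ce j)^-1 * ((z - be j) * y.[z] - al j * x.[z]) =
   (1 / ce j) * z * y.[z] - (be j / ce j) * y.[z] - (al j / ce j) * x.[z].
  ring.
set Y := y.[z]; set X := x.[z].
apply: (le_trans (ler_normB _ _)).
apply: (@le_trans _ _ (`|1 / ce j * z * Y| + `|be j / ce j * Y| + `|al j / ce j * X|)).
  by rewrite lerD2r ler_normB.
rewrite (normrM (1 / ce j * z)) (normrM (1 / ce j)) (normrM (be j / ce j)) (normrM (al j / ce j)).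
have n1 := normr_ge0 (1 / ce j); have n2 := normr_ge0 z; have n3 := normr_ge0 Y.
have n4 := normr_ge0 X.
have e1 : `|1 / ce j| * `|z| * `|Y| <= t * `|z| * `|Y|.
  by rewrite ler_wpM2r // ler_wpM2r.
have e2 : `|be j / ce j| * `|Y| <= t * `|Y| by rewrite ler_wpM2r.
have e3 : `|al j / ce j| * `|X| <= t * `|X| by rewrite ler_wpM2r.
by rewrite mulrDl; apply: lerD => //; apply: lerD.
Qed.

Definition Sg (R : pzRingType) (u : R) (j : nat) : R := \sum_(i < j.+1) u ^+ i.

Lemma Sg_recr (R : pzRingType) (u : R) j : Sg u j.+1 = Sg u j + u ^+ j.+1.
Proof. by rewrite /Sg big_ord_recr. Qed.

Lemma Sg_recl (R : pzRingType) (u : R) j : Sg u j.+1 = 1 + u * Sg u j.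
Proof.
rewrite /Sg big_ord_recl expr0 mulr_sumr; congr (_ + _).
by apply: eq_bigr => i _; rewrite /= exprS.
Qed.

Lemma Sg_ge1 (R : realDomainType) (u : R) j : 0 <= u -> 1 <= Sg u j.
Proof.
move=> hu; elim: j => [|j IH]; first by rewrite /Sg big_ord1 expr0.
by rewrite Sg_recr; apply: (le_trans IH); rewrite lerDl exprn_ge0.
Qed.

Lemma Sg_mono (R : realDomainType) (u : R) j k : 0 <= u -> (j <= k)%N -> Sg u j <= Sg u k.
Proof.
move=> hu /subnKC <-; elim: (k - j)%N => [|m IH]; first by rewrite addn0.
by rewrite addnS Sg_recr; apply: (le_trans IH); rewrite lerDl exprn_ge0.
Qed.

Lemma maj (R : realFieldType) (f : nat -> R) (t u k : R) (N : nat) :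
  0 <= t -> t <= 1/2 -> 0 <= u -> 0 <= k ->
  `|f 1%N| <= k -> f 0%N = 0 ->
  (forall j, (j.+2 <= N)%N -> `|f j.+2| <= (u + t) * `|f j.+1| + t * `|f j|) ->
  forall j, (j.+1 <= N)%N -> `|f j.+1| <= k * 2 ^+ j * Sg u j /\
                             2 * `|f j| <= k * 2 ^+ j * Sg u j.
Proof.
move=> ht0 ht1 hu hk h1 h0 hrec; elim=> [|j IH] hj.
  by rewrite /Sg big_ord1 !expr0 !mulr1 h0 normr0 mulr0.
have [i1 i2] := IH (ltnW hj).
have -> : k * 2 ^+ j.+1 = 2 * (k * 2 ^+ j) by rewrite exprS; ring.
move: i1 i2.
have hP : 0 <= k * 2 ^+ j by rewrite mulr_ge0 // exprn_ge0.
move: hP; set P := k * 2 ^+ j => hP i1 i2.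
have s1 := Sg_recl u j; have s2 := Sg_recr u j.
have s3 := Sg_ge1 j hu.
have s4 : 0 <= u ^+ j.+1 by rewrite exprn_ge0.
move: i1 i2 s1 s2 s3; set s := Sg u j; set s' := Sg u j.+1 => i1 i2 s1 s2 s3.
have a1 := normr_ge0 (f j.+1); have a2 := normr_ge0 (f j).
have b5 : P * s <= P * s' by rewrite ler_wpM2l // s2 lerDl.
split; last by rewrite -mulrA ler_pM2l //; apply: le_trans b5.
apply: (le_trans (hrec _ hj)).
have b1 : (u + t) * `|f j.+1| <= (u + t) * (P * s) by rewrite ler_wpM2l // addr_ge0.
have b2 : t * `|f j| <= t * (P * s / 2) by rewrite ler_wpM2l // ler_pdivlMr //; lra.
have b3 : u * (P * s) = P * s' - P by rewrite s1; ring.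
have b4 : t * (P * s) <= P * s / 2.
  have : 0 <= (1/2 - t) * (P * s).
    apply: mulr_ge0; first by rewrite subr_ge0.
    by apply: mulr_ge0 => //; apply: le_trans s3.
  lra.
have b6 : t * (P * s / 2) = (t * (P * s)) / 2 by ring.
have b7 : (u + t) * (P * s) = u * (P * s) + t * (P * s) by ring.
have b8 : 2 * P * s' = 2 * (P * s') by ring.
have b9 : 0 <= P * s by rewrite mulr_ge0 //; lra.
lra.
Qed.

Lemma my_le_bigmax_nat0 (R : realDomainType) (F : nat -> R) d m j :
  (m <= j < m + d)%N -> F j <= \big[Num.max/0]_(m <= i < m + d) F i.
Proof.
elim: d m => [|d IH] m /andP[hm hj]; first by rewrite addn0 in hj; move: (leq_ltn_trans hm hj); rewrite ltnn.
rewrite big_ltn; last by rewrite -addSnnS leq_addr.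
rewrite le_max; case: (ltngtP m j) => h.
- apply/orP; right; rewrite addnS -addSn; apply: IH; rewrite h /=.
  by rewrite addSn -addnS.
- by move: (leq_ltn_trans hm h); rewrite ltnn.
- by rewrite h lexx.
Qed.

Lemma my_le_bigmax_nat (R : realDomainType) (F : nat -> R) m n j :
  (m <= j < n)%N -> F j <= \big[Num.max/0]_(m <= i < n) F i.
Proof.
move=> /andP[hm hj]; have hmn : (m <= n)%N by apply: leq_trans (ltnW hj).
rewrite -(subnKC hmn); apply: my_le_bigmax_nat0; rewrite hm subnKC //.
Qed.

Lemma sum_pow2 (R : numDomainType) m : \sum_(i < m) (2 : R) ^+ i = 2 ^+ m - 1.
Proof.
elim: m => [|m IH]; first by rewrite big_ord0 expr0 subrr.
by rewrite big_ord_recr /= IH exprS; ring.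
Qed.

Unset Implicit Arguments.
Set Strict Implicit.

Theorem mainTheorem1 (R : realType) (mu : {measure set R -> \bar R})
  (ph : nat -> {poly R}) (b chat rho gamma : nat -> R) (K : nat)
  (hsupp : ~ finite_set (msupport mu))
  (hmom : finite_moments mu)
  (hOPS : monic_OPS mu ph)
  (hrec0 : 'X * ph 0%N = ph 1%N + b 0%N *: ph 0%N)
  (hrec : forall n, (1 <= n)%N ->
     'X * ph n = ph n.+1 + b n *: ph n + chat n *: ph n.-1)
  (hchat : forall n, (1 <= n)%N -> 0 < chat n)
  (hrho : forall n, rho n != 0) (hrho0 : rho 0%N = 1)
  (hK : (2 <= K)%N) (hg0 : gamma 0%N != 0) (hgK : gamma K != 0) :
  let p := fun n => rho n *: ph n in
  let a := rec_a rho in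
  let c := rec_c rho chat in
  (forall n, (1 <= n)%N ->
     'X * p n = a n.+1 *: p n.+1 + b n *: p n + c n *: p n.-1) /\
  (forall n, (K <= n)%N ->
   exists A B : {poly R},
     qcomb gamma p K n = A * p n + B * p n.-1 /\
     (size A <= K.-1)%N /\ ((2 < K)%N -> size A = K.-1) /\
     size B = K /\
     forall (tau : nat -> R) (n1 : nat),
       (1 <= n1)%N ->
       (forall m, 0 < tau m) ->
       (forall m, tau m.+1 <= tau m) ->
       (forall m, (n1 <= m)%N ->
          Num.max `|a m / c m.-1| (Num.max `|b m.-1 / c m.-1| `|1 / c m.-1|)
            <= tau m /\ tau m <= 1 / 2) ->
       (n1 + K - 1 <= n)%N ->
       forall x : R,
         `|A.[x]| <= 2 ^+ K * GammaMax gamma K 0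
                      * (1 + \sum_(1 <= j < K.-1)
                               tau (n - K).+1 ^+ j.+1 * `|x| ^+ j) /\
         `|B.[x]| <= 2 ^+ K * GammaMax gamma K 1
                      * \sum_(0 <= j < K) tau (n - K).+1 ^+ j * `|x| ^+ j).

Proof.
move=> p a c.
have hc : forall m, (1 <= m)%N -> c m != 0.
  move=> m hm; rewrite /c /rec_c mulf_neq0 ?invr_eq0 ?mulf_neq0 //.
  by rewrite gt_eqF // hchat.
have ha : forall m, a m != 0 by move=> m; rewrite /a /rec_a mulf_neq0 ?invr_eq0.
have part1 : forall n, (1 <= n)%N ->
     'X * p n = a n.+1 *: p n.+1 + b n *: p n + c n *: p n.-1.
  move=> m hm; rewrite /p /a /c /rec_a /rec_c -scalerAr hrec // !scalerDr !scalerA.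
  by rewrite divfK // divfK // mulrC.
split; first exact: part1.
move=> n hn.
have [K' eK] : exists K', K = K'.+2 by exists K.-2; lia.
subst K.
pose al j := a (n - j)%N.
pose be j := b (n - j.+1)%N.
pose ce j := c (n - j.+1)%N.
pose U j := (bwp al be ce 1 0 j).1.
pose V j := (bwp al be ce 0 1 j).1.
have hP : forall j, (j.+2 <= K'.+2)%N ->
    p (n - j.+2)%N = stepP al be ce j (p (n - j.+1)%N) (p (n - j)%N).
  move=> j hj; rewrite /stepP /al /be /ce.
  have hm : (1 <= n - j.+1)%N by lia.
  have e1 : (n - j.+2 = (n - j.+1).-1)%N by lia.
  have e2 : (n - j = (n - j.+1).+1)%N by lia.
  rewrite e1 e2; move: hm; set m := (n - j.+1)%N => hm.
  have e := part1 m hm; rewrite -!mul_polyC in e.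
  have -> : p m.-1 = (c m)^-1%:P * ((c m)%:P * p m.-1).
    by rewrite mulrA -polyCM mulVf ?mul1r // hc.
  congr (_ * _).
  by rewrite mulrBl e; ring.
have hrepr : forall j, (j <= K'.+2)%N -> p (n - j)%N = U j * p n + V j * p n.-1.
  move=> j hj; rewrite (bwp_repr (P := fun j => p (n - j)%N) hP hj).
  by rewrite subn0 subn1.
have hcoef : forall j, (j.+2 <= K'.+2)%N -> ce j != 0 /\ al j != 0.
  by move=> j hj; split; [apply: hc; lia | apply: ha].
have hU := @sizeU _ al be ce _ hcoef.
have hV := @sizeV _ al be ce _ (fun j hj => proj1 (hcoef j hj)).
have sU : forall j, (j <= K'.+2)%N -> (size (U j) <= K'.+1)%N.
  case=> [|[|j]] hj; first by rewrite /U /= size_poly1.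
    by rewrite /U /= size_poly0.
  by rewrite /U (proj1 (hU j _)).
have sU' : (1 <= K')%N -> forall j, (j <= K'.+1)%N -> (size (U j) <= K')%N.
  move=> hK1; case=> [|[|j]] hj; first by rewrite /U /= size_poly1.
    by rewrite /U /= size_poly0.
  by rewrite /U (proj1 (hU j _)) //; lia.
have sV : forall j, (j <= K'.+2)%N -> (size (V j) <= j)%N.
  case=> [|j] hj; first by rewrite /V /= size_poly0.
  by rewrite /V (proj1 (hV j _)).
exists (\sum_(j < K'.+3) gamma j *: U j), (\sum_(j < K'.+3) gamma j *: V j).
split.
  rewrite /qcomb !mulr_suml -big_split; apply: eq_bigr => j _.
  by rewrite hrepr ?scalerDr ?scalerAl // -ltnS ltn_ord.
split.
  apply: (big_ind (fun q : {poly R} => size q <= K'.+1)%N) => //.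
    by rewrite size_poly0.
    by move=> x y hx hy; apply: (leq_trans (size_polyD _ _)); rewrite geq_max hx hy.
  move=> j _; apply: (leq_trans (size_scale_leq _ _)); apply: sU.
  by rewrite -ltnS ltn_ord.
split.
  move=> hK2; have hK1 : (1 <= K')%N by lia.
  rewrite big_ord_recr /= addrC size_polyDl size_scale // /U (proj1 (hU K' _)) //.
  rewrite ltnS; apply: (big_ind (fun q : {poly R} => size q <= K')%N) => //.
    by rewrite size_poly0.
    by move=> x y hx hy; apply: (leq_trans (size_polyD _ _)); rewrite geq_max hx hy.
  move=> j _; apply: (leq_trans (size_scale_leq _ _)); apply: sU' => //.
  by rewrite -ltnS ltn_ord.
split.
  rewrite big_ord_recr /= addrC size_polyDl size_scale // /V (proj1 (hV K'.+1 _)) //.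
  rewrite ltnS; apply: (big_ind (fun q : {poly R} => size q <= K'.+1)%N) => //.
    by rewrite size_poly0.
    by move=> x y hx hy; apply: (leq_trans (size_polyD _ _)); rewrite geq_max hx hy.
  move=> j _; apply: (leq_trans (size_scale_leq _ _)); apply: (leq_trans (sV _ _)).
    by apply: ltnW.
  by rewrite -ltnS ltn_ord.
move=> tau n1 hn1 htp htd htau hnn1 x.
have tmono : forall m k, (m <= k)%N -> tau k <= tau m.
  move=> m k /subnKC <-; elim: (k - m)%N => [|d IH]; first by rewrite addn0.
  by rewrite addnS; apply: le_trans IH.
set t := tau (n - K'.+2).+1.
have ht0 : 0 <= t by exact: ltW (htp _).
have ht1 : t <= 1 / 2 by have [] := htau (n - K'.+2).+1 ltac:(lia).
have hcb : forall j, (j.+2 <= K'.+2)%N ->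
   `|1 / ce j| <= t /\ `|be j / ce j| <= t /\ `|al j / ce j| <= t.
  move=> j hj; have [h1 _] := htau (n - j)%N ltac:(lia).
  have h2 : tau (n - j)%N <= t by apply: tmono; lia.
  have e : ((n - j).-1 = n - j.+1)%N by lia.
  rewrite e !ge_max in h1; case/and3P: h1 => g1 g2 g3.
  by split; [|split]; apply: le_trans h2.
set u := t * `|x|.
have hu : 0 <= u by rewrite mulr_ge0.
have hA := @maj R (fun j => (U j.+1).[x]) t u t K'.+1 ht0 ht1 hu ht0.
have hB := @maj R (fun j => (V j).[x]) t u 1 K'.+2 ht0 ht1 hu ler01.
have U1 : U 1%N = 0 by [].
have U0 : U 0%N = 1 by [].
have V1 : V 1%N = 1 by [].
have V0 : V 0%N = 0 by [].
have hUr : forall j, U j.+2 = stepP al be ce j (U j.+1) (U j) by move=> j; exact: bwp_rec.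
have hVr : forall j, V j.+2 = stepP al be ce j (V j.+1) (V j) by move=> j; exact: bwp_rec.
have {}hA : forall j, (j.+1 <= K'.+1)%N -> `|(U j.+2).[x]| <= t * 2 ^+ j * Sg u j.
  move=> j hj; apply: (proj1 (hA _ _ _ j hj)).
  - rewrite hUr U1 U0 horner_stepP horner0 hornerC mulr0 sub0r mulr1 mulrN normrN mulrC.
    by have [_ [_ ->]] := hcb 0%N ltac:(lia).
  - by rewrite /= U1 horner0.
  - move=> i hi; rewrite /= hUr.
    have [c1 [c2 c3]] := hcb i.+1 ltac:(lia).
    exact: step_bound.
have {}hB : forall j, (j.+1 <= K'.+2)%N -> `|(V j.+1).[x]| <= 2 ^+ j * Sg u j.
  move=> j hj; rewrite -[2 ^+ j]mul1r; apply: (proj1 (hB _ _ _ j hj)).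
  - by rewrite V1 hornerC normr1.
  - by rewrite V0 horner0.
  - move=> i hi; rewrite hVr.
    have [c1 [c2 c3]] := hcb i ltac:(lia).
    exact: step_bound.
have hSm : forall j k, (j <= k)%N -> Sg u j <= Sg u k by move=> j k; exact: Sg_mono.
have hS0 : 0 <= Sg u K' by apply: le_trans (Sg_ge1 _ hu).
have hS1 : 0 <= Sg u K'.+1 by apply: le_trans (Sg_ge1 _ hu).
have eA : t * Sg u K' = t + \sum_(1 <= j < K'.+2.-1) t ^+ j.+1 * `|x| ^+ j.
  rewrite /Sg mulr_sumr big_ord_recl /= expr0 mulr1 big_add1 /= big_mkord.
  congr (_ + _); apply: eq_bigr => i _.
  by rewrite /u exprMn /bump /= add1n [t ^+ i.+2]exprS mulrA.
have eB : Sg u K'.+1 = \sum_(0 <= j < K'.+2) t ^+ j * `|x| ^+ j.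
  by rewrite /Sg big_mkord; apply: eq_bigr => i _; rewrite /u exprMn.
have W0 : 0 <= \sum_(1 <= j < K'.+2.-1) t ^+ j.+1 * `|x| ^+ j.
  by apply: sumr_ge0 => i _; rewrite mulr_ge0 ?exprn_ge0.
move: eA W0; set W := \sum_(1 <= j < K'.+2.-1) _ => eA W0.
rewrite -eB.
set G0 := GammaMax gamma K'.+2 0.
set G1 := GammaMax gamma K'.+2 1.
have hG0 : forall j, (j <= K'.+2)%N -> `|gamma j| <= G0.
  by move=> j hj; rewrite /G0 /GammaMax; apply: (my_le_bigmax_nat (fun j => `|gamma j|)); rewrite leq0n /=.
have hG1 : forall j, (1 <= j <= K'.+2)%N -> `|gamma j| <= G1.
  by move=> j /andP[h1 h2]; rewrite /G1 /GammaMax; apply: (my_le_bigmax_nat (fun j => `|gamma j|)); rewrite h1 ltnS.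
have G0p : 0 <= G0 by apply: le_trans (hG0 0%N isT).
have G1p : 0 <= G1 by apply: le_trans (hG1 1%N isT).
have Qp : 1 <= (2 : R) ^+ K'.+1 by rewrite exprn_ege1 // ler1n.
split.
  rewrite horner_sum; apply: le_trans (ler_norm_sum _ _ _) _.
  rewrite -(big_mkord xpredT (fun j => `|(gamma j *: U j).[x]|)).
  rewrite big_nat_recl // big_nat_recl // big_mkord /=.
  rewrite !hornerZ U0 U1 hornerC horner0 mulr0 normr0 add0r mulr1.
  have hsum : \sum_(i < K'.+1) `|(gamma i.+2 *: U i.+2).[x]| <=
              \sum_(i < K'.+1) G0 * (t * Sg u K') * 2 ^+ i.
    apply: ler_sum => i _; rewrite hornerZ normrM.
    have hi : (i <= K')%N by rewrite -ltnS ltn_ord.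
    have hi2 : (i.+2 <= K'.+2)%N by [].
    have hi1 : (i.+1 <= K'.+1)%N by [].
    apply: (le_trans (ler_pM (normr_ge0 _) (normr_ge0 _) (hG0 i.+2 hi2) (hA i hi1))).
    rewrite -[G0 * (t * Sg u K') * _]mulrA ler_wpM2l //.
    apply: (@le_trans _ _ (t * 2 ^+ i * Sg u K')).
      by rewrite ler_wpM2l ?mulr_ge0 ?exprn_ge0 // hSm.
    by rewrite mulrAC.
  rewrite -mulr_sumr sum_pow2 eA in hsum.
  have g1 := hG0 0%N isT.
  have k1 : (t + W) * (2 ^+ K'.+1 - 1) <= (1 + W) * 2 ^+ K'.+1.
    apply: (@le_trans _ _ ((1 + W) * (2 ^+ K'.+1 - 1))).
      have q1 : 0 <= 2 ^+ K'.+1 - 1 :> R by rewrite subr_ge0.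
      have q2 : t + W <= 1 + W by lra.
      by rewrite ler_wpM2r.
    by rewrite ler_wpM2l ?addr_ge0 // lerBlDr lerDl.
  have k2 : G0 * ((t + W) * (2 ^+ K'.+1 - 1)) <= G0 * ((1 + W) * 2 ^+ K'.+1).
    by rewrite ler_wpM2l.
  have k3 : G0 <= G0 * ((1 + W) * 2 ^+ K'.+1).
    rewrite ler_peMr //; apply: (le_trans Qp); rewrite ler_peMl ?(le_trans ler01 Qp) //; lra.
  have k4 : 2 ^+ K'.+2 * G0 * (1 + W) = 2 * (G0 * ((1 + W) * 2 ^+ K'.+1)).
    by rewrite exprS; ring.
  rewrite k4; rewrite mulrA in k2.
  lra.
rewrite horner_sum; apply: le_trans (ler_norm_sum _ _ _) _.
rewrite -(big_mkord xpredT (fun j => `|(gamma j *: V j).[x]|)).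
rewrite big_nat_recl // big_mkord /=.
rewrite hornerZ V0 horner0 mulr0 normr0 add0r.
have hsum : \sum_(i < K'.+2) `|(gamma i.+1 *: V i.+1).[x]| <=
            \sum_(i < K'.+2) G1 * Sg u K'.+1 * 2 ^+ i.
  apply: ler_sum => i _; rewrite hornerZ normrM.
  have hi2 : (1 <= i.+1 <= K'.+2)%N by rewrite /= ltn_ord.
  have hi1 : (i.+1 <= K'.+2)%N by rewrite ltn_ord.
  apply: (le_trans (ler_pM (normr_ge0 _) (normr_ge0 _) (hG1 i.+1 hi2) (hB i hi1))).
  rewrite -[G1 * Sg u K'.+1 * _]mulrA ler_wpM2l // mulrC ler_wpM2r ?exprn_ge0 //.
  by apply: hSm; rewrite -ltnS ltn_ord.
rewrite -mulr_sumr sum_pow2 in hsum.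
apply: (le_trans hsum).
have k1 : G1 * Sg u K'.+1 * (2 ^+ K'.+2 - 1) <= G1 * Sg u K'.+1 * 2 ^+ K'.+2.
  by rewrite ler_wpM2l ?mulr_ge0 // lerBlDr lerDl.
apply: (le_trans k1); rewrite le_eqVlt; apply/orP; left; apply/eqP; ring.
Qed.
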